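(* Let $U$ and $X$ be compact metric spaces, let $T:U\to U$ be a surjective map (not necessarily continuous), and let $g:U\times X\to X$ be a continuous driven system which is SI-invertible. Let $Y_T\subset X\times X$ be the relation induced by $(U,T)$. Then there exists a well-defined map $G_T:Y_T\to Y_T$ such that for every orbit $\bar u=\{u_k\}_{k\in\mathbb Z}$ of $T$, every solution $\{x_k\}_{k\in\mathbb Z}$ of $g$ for the input $\bar u$, and every $n\in\mathbb Z$, $$G_T(x_{n-1},x_n)=(x_n,x_{n+1}).$$
   Context: An orbit of $T$ is a bi-infinite sequence $\{u_n\}_{n\in\mathbb Z}\subset U$ with $u_{n+1}=Tu_n$ for all $n\in\mathbb Z$. A driven system is a continuous map $g:U\times X\to X$ with $U,X$ compact metric spaces. Given a bi-infinite input $\bar u=\{u_n\}_{n\in\mathbb Z}\subset U$, a solution of $g$ for $\bar u$ is a bi-infinite sequence $\{x_n\}_{n\in\mathbb Z}\subset X$ with $x_{n+1}=g(u_n,x_n)$ for all $n\in\mathbb Z$. The driven system $g$ is SI-invertible (state-input invertible) if for every $x\in X$ the map $g(\cdot,x):U\to X$ is injective, i.e. whenever $x_{n+1}=g(u_n,x_n)$, the input $u_n$ is uniquely determined by $x_n$ and $x_{n+1}$. The relation induced by $(U,T)$ is $$Y_T:=\{(x_{n-1},x_n): \{x_k\}_{k\in\mathbb Z}\text{ is a solution of }g\text{ for some orbit of }T,\ n\in\mathbb Z\}.$$ *)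

(* Defs.v *)
From HB Require Import structures.
From mathcomp Require Import all_boot all_order all_algebra.
From mathcomp Require Import all_classical all_reals all_analysis.
Set Implicit Arguments. Unset Strict Implicit. Unset Printing Implicit Defensive.
Local Open Scope classical_set_scope.

Definition is_orbit {U : Type} (T : U -> U) (u : int -> U) : Prop :=
  forall n : int, u (n + 1)%R = T (u n).

Definition is_solution {U X : Type} (g : U * X -> X) (u : int -> U) (x : int -> X) : Prop :=
  forall n : int, x (n + 1)%R = g (u n, x n).

Definition SI_invertible {U X : Type} (g : U * X -> X) : Prop :=
  forall x : X, injective (fun u : U => g (u, x)).

Definition induced_relation {U X : Type} (T : U -> U) (g : U * X -> X) : set (X * X) :=
  [set p | exists u x n, is_orbit T u /\ is_solution g u x /\ p = (x (n - 1)%R, x n)].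

(* Main.v *)
Require Import Defs.
From HB Require Import structures.
From mathcomp Require Import all_boot all_order all_algebra.
From mathcomp Require Import all_classical all_reals all_analysis.
Local Open Scope classical_set_scope.

Definition Prel {U X : Type} (T : U -> U) (g : U * X -> X) (p q : X * X) : Prop :=
  exists u x (n : int), is_orbit T u /\ is_solution g u x /\
    p = (x (n - 1)%R, x n) /\ q = (x n, x (n + 1)%R).

Lemma Prel_uniq {U X : Type} (T : U -> U) (g : U * X -> X) p q q' :
  SI_invertible g -> Prel T g p q -> Prel T g p q' -> q = q'.
Proof.
move=> Hinj [u [x [n [Hu [Hx [Hp Hq]]]]]] [v [y [m [Hv [Hy [Hp' Hq']]]]]].
rewrite Hp in Hp'; case: Hp' => E1 E2.
have Hxn : x n = g (u (n - 1)%R, x (n - 1)%R).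
  by rewrite -Hx GRing.subrK.
have Hym : y m = g (v (m - 1)%R, y (m - 1)%R).
  by rewrite -Hy GRing.subrK.
have Euv : u (n - 1)%R = v (m - 1)%R.
  apply: (Hinj (x (n - 1)%R)) => /=.
  by rewrite -Hxn E1 -Hym.
have Eun : u n = v m.
  have -> : n = ((n - 1) + 1)%R by rewrite GRing.subrK.
  have -> : m = ((m - 1) + 1)%R by rewrite GRing.subrK.
  by rewrite Hu Hv Euv.
rewrite Hq Hq' Hx Hy Eun E2 //.
Qed.

Theorem theorem3 (R : realType) (U X : metricType R)
  (T : U -> U) (g : U * X -> X) :
  compact [set: U] -> compact [set: X] ->
  (forall v : U, exists w : U, T w = v) -> continuous g -> SI_invertible g ->
  exists G : X * X -> X * X,
    (forall p, induced_relation T g p -> induced_relation T g (G p)) /\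
    (forall (u : int -> U) (x : int -> X) (n : int),
        is_orbit T u -> is_solution g u x ->
        G (x (n - 1)%R, x n) = (x n, x (n + 1)%R)).
Proof.
move=> _ _ _ _ Hinj.
pose G := fun p : X * X =>
  match pselect (exists q, Prel T g p q) with
  | left H => proj1_sig (cid H)
  | right _ => p
  end.
have GP : forall p q, Prel T g p q -> G p = q.
  move=> p q Hpq; rewrite /G; case: pselect => [H|H]; last by exfalso; apply: H; exists q.
  case: (cid H) => q' Hq' /=; exact: (@Prel_uniq U X T g p q' q Hinj Hq' Hpq).
exists G; split.
- move=> p [u [x [n [Hu [Hx Hp]]]]].
  rewrite (GP p (x n, x (n + 1)%R)); last by exists u, x, n.
  exists u, x, (n + 1)%R; split => //; split => //.
  by rewrite GRing.addrK.
- move=> u x n Hu Hx; apply: GP; by exists u, x, n.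
Qed.
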